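(* Let $\mu,\nu\in\mathbb{R}$. The double inequality $$\frac{x^2+\mu x+12}{12x^4(x+1)^2}<[\psi'(x)]^2+\psi''(x)<\frac{x^2+\nu x+12}{12x^4(x+1)^2}$$ holds for all $x\in(0,\infty)$ if and only if $\mu\le0$ and $\nu\ge4$.
   Context: $\Gamma$ is Euler's gamma function, $\psi=\Gamma'/\Gamma$ is the digamma function, and $\psi',\psi''$ are its first and second derivatives. *)

(* Defs.v *)
From Stdlib Require Import Reals Lra ClassicalEpsilon Factorial.
Open Scope R_scope.

(* The (unique, if it exists) real satisfying P, or 0 if there is none.
   Used to turn limits / derivatives into total functions. *)
Definition the_or0 (P : R -> Prop) : R :=
  match excluded_middle_informative (exists l, P l) with
  | left H => proj1_sig (constructive_indefinite_description P H)
  | right _ => 0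
  end.

Fixpoint poch (x : R) (n : nat) : R :=
  match n with
  | O => x
  | S m => poch x m * (x + INR (S m))
  end.

(* Gauss/Euler product: Gamma x = lim_n n! n^x / (x (x+1) ... (x+n)), x > 0 *)
Definition gauss_seq (x : R) (n : nat) : R :=
  INR (fact n) * Rpower (INR n) x / poch x n.

(* Euler's gamma function (meaningful for x > 0) *)
Definition Gamma (x : R) : R := the_or0 (Un_cv (gauss_seq x)).

(* derivative of f at x (as a total function; 0 where f is not differentiable) *)
Definition deriv (f : R -> R) (x : R) : R := the_or0 (derivable_pt_lim f x).

Definition psi (x : R) : R := deriv Gamma x / Gamma x.
Definition psi1 (x : R) : R := deriv psi x.
Definition psi2 (x : R) : R := deriv psi1 x.

(* Main.v *)
Require Import Defs.
From Stdlib Require Import Reals Lra Lia Factorial ClassicalEpsilon.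
Open Scope R_scope.

Lemma the_or0_spec (P : R -> Prop) (l : R) :
  P l -> (forall a b, P a -> P b -> a = b) -> the_or0 P = l.
Proof.
  intros Hl Hu. unfold the_or0.
  destruct (excluded_middle_informative _) as [H|H].
  - destruct (constructive_indefinite_description P H) as [l' Hl']. simpl.
    apply Hu; assumption.
  - exfalso; apply H; exists l; exact Hl.
Qed.

Definition PS (u : nat -> R -> R) (n : nat) (y : R) : R := sum_f_R0 (fun k => u k y) n.
Definition SL (u : nat -> R -> R) (y : R) : R := the_or0 (Un_cv (fun n => PS u n y)).

Definition Maj (u : nat -> R -> R) (C y : R) : Prop :=
  0 <= C /\ forall k, (1 <= k)%nat -> Rabs (u k y) <= C / (INR k * INR (S k)).

Lemma INR_pos_S (n : nat) : 0 < INR (S n).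
Proof. apply lt_0_INR; lia. Qed.

Lemma tail_bound u C y : Maj u C y ->
  forall d n, Rabs (PS u (n + d) y - PS u n y) <= C * (/ INR (S n) - / INR (S (n + d))).
Proof.
  intros [HC Hk] d. induction d as [|d IH]; intros n.
  - rewrite Nat.add_0_r. unfold Rminus. rewrite !Rplus_opp_r, Rabs_R0, Rmult_0_r. lra.
  - replace (n + S d)%nat with (S (n + d)) by lia.
    unfold PS at 1. simpl sum_f_R0. fold (PS u (n+d) y).
    specialize (IH n). specialize (Hk (S (n+d)) ltac:(lia)).
    pose proof (INR_pos_S n). pose proof (INR_pos_S (n+d)). pose proof (INR_pos_S (S (n+d))).
    assert (E : C / (INR (S (n + d)) * INR (S (S (n + d)))) =
                C * (/ INR (S (n+d)) - / INR (S (S (n+d))))).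
    { rewrite (S_INR (S (n+d))). field. lra. }
    rewrite E in Hk.
    replace (PS u (n + d) y + u (S (n + d)) y - PS u n y) with
      ((PS u (n + d) y - PS u n y) + u (S (n + d)) y) by ring.
    eapply Rle_trans; [apply Rabs_triang|]. lra.
Qed.

Lemma tail_bound' u C y : Maj u C y ->
  forall n m, (n <= m)%nat -> Rabs (PS u m y - PS u n y) <= C / INR (S n).
Proof.
  intros HM n m Hnm. replace m with (n + (m - n))%nat by lia.
  eapply Rle_trans; [apply (tail_bound u C y HM)|].
  destruct HM as [HC _]. pose proof (INR_pos_S n). pose proof (INR_pos_S (n + (m-n))).
  unfold Rdiv. apply Rmult_le_compat_l; [lra|].
  assert (0 < / INR (S (n + (m - n)))) by (apply Rinv_0_lt_compat; lra). lra.
Qed.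

Lemma small_inv (C eps : R) : 0 < eps -> 0 <= C -> exists N, forall n, (N <= n)%nat -> C / INR (S n) < eps.
Proof.
  intros He HC.
  destruct (INR_archimed eps C He) as [N HN].
  exists N. intros n Hn. pose proof (INR_pos_S n).
  apply Rmult_lt_reg_r with (INR (S n)); [lra|].
  unfold Rdiv. rewrite Rmult_assoc, Rinv_l by lra. rewrite Rmult_1_r.
  assert (INR N <= INR (S n)) by (apply le_INR; lia).
  assert (0 <= INR N) by apply pos_INR. nra.
Qed.

Lemma SL_conv u C y : Maj u C y -> Un_cv (fun n => PS u n y) (SL u y).
Proof.
  intros HM.
  assert (Hc : Cauchy_crit (fun n => PS u n y)).
  { intros eps He. destruct HM as [HC Hk] eqn:E.
    destruct (small_inv C eps He HC) as [N HN]. exists N. intros n m Hn Hm.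
    unfold Rdist. destruct (Nat.le_ge_cases n m) as [H|H].
    - rewrite Rabs_minus_sym. eapply Rle_lt_trans; [apply (tail_bound' u C y HM n m H)|]. apply HN; lia.
    - eapply Rle_lt_trans; [apply (tail_bound' u C y HM m n H)|]. apply HN; lia. }
  destruct (R_complete _ Hc) as [l Hl].
  unfold SL. rewrite (the_or0_spec _ l Hl); [exact Hl|].
  intros a b Ha Hb. eapply UL_sequence; eauto.
Qed.

Lemma SL_bound u C y : Maj u C y -> forall n, Rabs (SL u y - PS u n y) <= C / INR (S n).
Proof.
  intros HM n. pose proof (SL_conv u C y HM) as Hcv.
  destruct (Rle_lt_dec (Rabs (SL u y - PS u n y)) (C / INR (S n))) as [H|H]; [exact H|].
  exfalso. set (e := Rabs (SL u y - PS u n y) - C / INR (S n)).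
  destruct (Hcv e ltac:(unfold e; lra)) as [N HN].
  specialize (HN (max N n) ltac:(lia)). unfold Rdist in HN.
  pose proof (tail_bound' u C y HM n (max N n) ltac:(lia)).
  assert (Rabs (SL u y - PS u n y) <= Rabs (PS u (max N n) y - SL u y) + Rabs (PS u (max N n) y - PS u n y)).
  { replace (SL u y - PS u n y) with (-(PS u (max N n) y - SL u y) + (PS u (max N n) y - PS u n y)) by ring.
    eapply Rle_trans; [apply Rabs_triang|]. rewrite Rabs_Ropp. lra. }
  unfold e in HN. lra.
Qed.

Lemma SL_CVU u C c (r : posreal) : 0 <= C -> (forall y, Boule c r y -> Maj u C y) -> CVU (PS u) (SL u) c r.
Proof.
  intros HC HM eps He. destruct (small_inv C eps He HC) as [N HN].
  exists N. intros n y Hn Hy. eapply Rle_lt_trans; [apply (SL_bound u C y (HM y Hy))|]. apply HN; lia.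
Qed.

Lemma PS_deriv u u' y : (forall k, derivable_pt_lim (u k) y (u' k y)) ->
  forall n, derivable_pt_lim (fun z => PS u n z) y (PS u' n y).
Proof.
  intros Hd n. induction n as [|n IH].
  - unfold PS; simpl. apply Hd.
  - unfold PS; simpl. fold (PS u n) (PS u' n y).
    apply (derivable_pt_lim_plus (fun z => PS u n z) (u (S n))); auto.
Qed.

Lemma SL_deriv u u' (F : R -> R) x (r : posreal) C :
  (forall k y, Boule x r y -> derivable_pt_lim (u k) y (u' k y)) ->
  0 <= C -> (forall y, Boule x r y -> Maj u' C y) ->
  (forall y, Boule x r y -> Un_cv (fun n => PS u n y) (F y)) ->
  derivable_pt_lim F x (SL u' x).
Proof.
  intros Hd HC HM Hcv.
  apply (CVU_derivable (fun n z => PS u n z) (PS u') F (SL u') x r).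
  - apply (SL_CVU u' C x r HC HM).
  - exact Hcv.
  - intros n y Hy. apply PS_deriv. intros k. apply Hd; auto.
  - unfold Boule. rewrite Rminus_diag, Rabs_R0. apply cond_pos.
Qed.
From Coquelicot Require Import Coquelicot.

Definition u0 (k : nat) (y : R) : R :=
  match k with O => - ln y | S j => y * ln (1 + / INR (S j)) - ln (1 + y / INR (S j)) end.
Definition u1 (k : nat) (y : R) : R :=
  match k with O => - / y | S j => ln (1 + / INR (S j)) - / (y + INR (S j)) end.
Definition u2 (k : nat) (y : R) : R := / (y + INR k) ^ 2.
Definition u3 (k : nat) (y : R) : R := -2 / (y + INR k) ^ 3.
Definition u4 (k : nat) (y : R) : R := 6 / (y + INR k) ^ 4.

Lemma d_u0 k y : 0 < y -> derivable_pt_lim (u0 k) y (u1 k y).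
Proof.
  intros Hy. apply is_derive_Reals. destruct k as [|j]; unfold u0, u1; cbv beta iota.
  - auto_derive; [exact Hy|]. field. lra.
  - assert (0 < INR (S j)) by apply INR_pos_S.
    generalize dependent (INR (S j)); intros n Hn.
    auto_derive.
    + apply Rplus_lt_0_compat; [lra|]. apply Rmult_lt_0_compat; [lra|apply Rinv_0_lt_compat; lra].
    + field. split; [lra|]. intro H1. 
      assert (1 + y * / n > 0). { apply Rplus_lt_0_compat; [lra|]. apply Rmult_lt_0_compat; [lra|apply Rinv_0_lt_compat; lra]. }
      replace (INR (S j) + y) with (INR (S j) * (1 + y * / INR (S j))) in H1 by (field; lra).
      nra.
Qed.

Lemma d_u1 k y : 0 < y -> derivable_pt_lim (u1 k) y (u2 k y).
Proof.
  intros Hy. apply is_derive_Reals. unfold u2. destruct k as [|j]; unfold u1; cbv beta iota.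
  - auto_derive; [lra|]. simpl INR. field; lra.
  - assert (0 < INR (S j)) by apply INR_pos_S.
    generalize dependent (INR (S j)); intros n Hn.
    auto_derive; [lra|]. field; lra.
Qed.

Lemma d_u2 k y : 0 < y -> derivable_pt_lim (u2 k) y (u3 k y).
Proof.
  intros Hy. apply is_derive_Reals. unfold u2, u3.
  assert (0 <= INR k) by apply pos_INR.
  generalize dependent (INR k); intros n Hn.
  assert (y + n <> 0) by lra. auto_derive; [rewrite Rmult_1_r; apply Rmult_integral_contrapositive; tauto|]. field; lra.
Qed.

Lemma d_u3 k y : 0 < y -> derivable_pt_lim (u3 k) y (u4 k y).
Proof.
  intros Hy. apply is_derive_Reals. unfold u3, u4.
  assert (0 <= INR k) by apply pos_INR.
  generalize dependent (INR k); intros n Hn.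
  assert (y + n <> 0) by lra. auto_derive; [assert (0 < (y+n)*((y+n)*((y+n)*1))) by (repeat apply Rmult_lt_0_compat; lra); lra|]. field; lra.
Qed.

Lemma ln_up u : 0 <= u -> ln (1 + u) <= u.
Proof.
  intros Hu. rewrite <- (ln_exp u) at 2. 
  destruct (Req_dec u 0) as [->|H]. { rewrite Rplus_0_r, ln_1, exp_0, ln_1. lra. }
  left. apply ln_increasing; [lra|]. apply exp_ineq1; auto.
Qed.

Lemma ln_low u : 0 <= u -> u / (1 + u) <= ln (1 + u).
Proof.
  intros Hu.
  assert (H : ln (1 + - (u / (1+u))) <= - (u / (1+u))).
  { rewrite <- (ln_exp (- (u / (1+u)))) at 2.
    destruct (Req_dec u 0) as [->|H].
    - replace (1 + - (0/(1+0))) with 1 by field. rewrite ln_1. replace (-(0/(1+0))) with 0 by field. rewrite exp_0, ln_1. lra.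
    - left. apply ln_increasing.
      + assert (u / (1+u) < 1) by (apply (Rmult_lt_reg_r (1+u)); [lra|]; field_simplify; lra). lra.
      + apply exp_ineq1. intro H1. assert (u / (1+u) = 0) by lra.
        unfold Rdiv in H0. apply Rmult_integral in H0. destruct H0 as [H0|H0]; [lra|].
        apply Rinv_neq_0_compat in H0; lra. }
  replace (1 + - (u / (1 + u))) with (/ (1 + u)) in H by (field; lra).
  rewrite ln_Rinv in H by lra. lra.
Qed.

Lemma abs_div_helper t C n : 0 < n -> -C <= t * (n * (n + 1)) <= C -> Rabs t <= C / (n * (n + 1)).
Proof.
  intros Hn [H1 H2]. assert (0 < n * (n+1)) by nra.
  apply Rabs_le. split.
  - apply (Rmult_le_reg_r (n*(n+1))); auto. replace (- (C / (n*(n+1))) * (n*(n+1))) with (-C) by (field; lra). lra.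
  - apply (Rmult_le_reg_r (n*(n+1))); auto. replace (C / (n*(n+1)) * (n*(n+1))) with C by (field; lra). lra.
Qed.

Lemma Maj_intro u C y : 0 <= C ->
  (forall n, 1 <= n -> forall j, n = INR (S j) -> -C <= u (S j) y * (n * (n + 1)) <= C) -> Maj u C y.
Proof.
  intros HC H. split; auto. intros k Hk. destruct k as [|j]; [lia|].
  rewrite (S_INR (S j)). apply abs_div_helper.
  - apply INR_pos_S.
  - apply (H _ ); auto. replace 1 with (INR 1) by reflexivity. apply le_INR; lia.
Qed.

Lemma Maj_mono u C C' y : Maj u C y -> C <= C' -> Maj u C' y.
Proof.
  intros [HC Hk] HCC. split; [lra|]. intros k Hk1. eapply Rle_trans; [apply Hk; auto|].
  unfold Rdiv. apply Rmult_le_compat_r; [|lra].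
  left. apply Rinv_0_lt_compat. apply Rmult_lt_0_compat; [|apply INR_pos_S]. apply lt_0_INR; lia.
Qed.

Lemma ln_facts n : 1 <= n -> ln (1 + / n) * (n + 1) >= 1 /\ ln (1 + / n) * n <= 1.
Proof.
  intros Hn. assert (0 < /n) by (apply Rinv_0_lt_compat; lra).
  pose proof (ln_up (/n) ltac:(lra)). pose proof (ln_low (/n) ltac:(lra)).
  split.
  - replace (/ n / (1 + / n)) with (/ (n+1)) in H1 by (field; lra).
    apply Rle_ge. apply (Rmult_le_reg_r (/(n+1))). apply Rinv_0_lt_compat; lra.
    rewrite Rmult_assoc, Rinv_r, Rmult_1_l, Rmult_1_r by lra. exact H1.
  - apply (Rmult_le_reg_r (/n)); auto. rewrite Rmult_assoc, Rinv_r, Rmult_1_l, Rmult_1_r by lra. exact H0.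
Qed.

Lemma ln_facts2 n y : 1 <= n -> 0 < y -> ln (1 + y / n) * (n + y) >= y /\ ln (1 + y / n) * n <= y.
Proof.
  intros Hn Hy. assert (0 < y/n) by (apply Rdiv_lt_0_compat; lra).
  pose proof (ln_up (y/n) ltac:(lra)). pose proof (ln_low (y/n) ltac:(lra)).
  split.
  - replace (y / n / (1 + y / n)) with (y / (n+y)) in H1 by (field; lra).
    apply Rle_ge. apply (Rmult_le_reg_r (/(n+y))). apply Rinv_0_lt_compat; lra.
    rewrite Rmult_assoc, Rinv_r, Rmult_1_r by lra. exact H1.
  - apply (Rmult_le_reg_r (/n)). apply Rinv_0_lt_compat; lra. rewrite Rmult_assoc, Rinv_r, Rmult_1_r by lra. exact H0.
Qed.

Lemma Maj_u0 y : 0 < y -> Maj u0 (2 * (y + y^2)) y.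
Proof.
  intros Hy. apply Maj_intro; [nra|]. intros n Hn j Ej. unfold u0; cbv beta iota. rewrite <- Ej.
  destruct (ln_facts n Hn) as [A1 A2]. destruct (ln_facts2 n y Hn Hy) as [B1 B2].
  set (A := ln (1 + / n)) in *. set (B := ln (1 + y / n)) in *.
  assert (HB : B * n * (n + y) >= y * n) by nra.
  split.
  - assert (0 <= y*n) by nra.
    assert (y*n*(A*(n+1)) >= y*n*1) by (apply Rle_ge, Rmult_le_compat_l; lra).
    assert ((n+1)*(B*n) <= (n+1)*y) by (apply Rmult_le_compat_l; lra).
    assert (0 <= y^2) by nra.
    replace ((y * A - B) * (n * (n + 1))) with (y*n*(A*(n+1)) - (n+1)*(B*n)) by ring.
    lra.
  -
    assert (0 <= y*(n+1)) by nra.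
    assert (y*(n+1)*(A*n) <= y*(n+1)*1) by (apply Rmult_le_compat_l; lra).
    assert (HB2 : B * (n+y) * (n*(n+1)) >= y * (n*(n+1))) by (apply Rle_ge, Rmult_le_compat_r; nra).
    assert (B * n * (n+1) >= y * n * (n+1) / (n+y)).
    { apply Rle_ge. apply (Rmult_le_reg_r (n+y)); [lra|].
      replace (y * n * (n + 1) / (n + y) * (n + y)) with (y * (n*(n+1))) by (field; lra). nra. }
    assert (y * (n+1) - y * n * (n+1) / (n+y) <= 2 * y^2).
    { replace (y * (n+1) - y * n * (n+1) / (n+y)) with (y^2 * ((n+1) / (n+y))) by (field; lra).
      assert ((n+1)/(n+y) <= 2). { apply (Rmult_le_reg_r (n+y)); [lra|].
         replace ((n + 1) / (n + y) * (n + y)) with (n+1) by (field; lra). lra. }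
      assert (0 <= y^2) by nra.
      assert (y^2 * ((n+1)/(n+y)) <= y^2 * 2) by (apply Rmult_le_compat_l; lra). lra. }
    replace ((y * A - B) * (n * (n + 1))) with (y*(n+1)*(A*n) - B * n * (n+1)) by ring.
    lra.
Qed.

Lemma Maj_u1 y : 0 < y -> Maj u1 (1 + 2 * y) y.
Proof.
  intros Hy. apply Maj_intro; [nra|]. intros n Hn j Ej. unfold u1; cbv beta iota. rewrite <- Ej.
  destruct (ln_facts n Hn) as [A1 A2]. set (A := ln (1 + / n)) in *.
  replace ((A - / (y + n)) * (n * (n + 1))) with (A * n * (n+1) - n * (n+1) / (y+n)) by (field; lra).
  assert (n * (n+1) / (y+n) * (y + n) = n * (n+1)) by (field; lra).
  assert (0 < n * (n+1) / (y+n)) by (apply Rdiv_lt_0_compat; nra).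
  set (Q := n * (n+1) / (y+n)) in *.
  assert (n*(A*(n+1)) >= n*1) by (apply Rle_ge, Rmult_le_compat_l; lra).
  assert ((n+1)*(A*n) <= (n+1)*1) by (apply Rmult_le_compat_l; lra).
  assert (Q <= n + 1).
  { apply (Rmult_le_reg_r (y+n)); [lra|]. rewrite H. nra. }
  assert (n + 1 - 2*y <= Q).
  { apply (Rmult_le_reg_r (y+n)); [lra|]. rewrite H. nra. }
  replace (A * n * (n+1)) with ((n+1)*(A*n)) by ring.
  split; nra.
Qed.

Lemma Maj_u2 y : 0 < y -> Maj u2 2 y.
Proof.
  intros Hy. apply Maj_intro; [lra|]. intros n Hn j Ej. unfold u2. rewrite <- Ej.
  replace (/ (y + n) ^ 2 * (n * (n + 1))) with (n * (n+1) / (y+n)^2) by (field; lra).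
  assert (0 < (y+n)^2) by nra.
  assert (n * (n+1) / (y+n)^2 * (y+n)^2 = n * (n+1)) by (field; lra).
  assert (0 < n * (n+1) / (y+n)^2) by (apply Rdiv_lt_0_compat; nra).
  split; nra.
Qed.

Lemma Maj_u3 y : 0 < y -> Maj u3 4 y.
Proof.
  intros Hy. apply Maj_intro; [lra|]. intros n Hn j Ej. unfold u3. rewrite <- Ej.
  replace (-2 / (y + n) ^ 3 * (n * (n + 1))) with (-2 * (n * (n+1) / (y+n)^3)) by (field; lra).
  assert (0 < (y+n)^3) by (apply pow_lt; lra).
  assert (n * (n+1) / (y+n)^3 * (y+n)^3 = n * (n+1)) by (field; lra).
  assert (0 < n * (n+1) / (y+n)^3) by (apply Rdiv_lt_0_compat; nra).
  assert (n^3 <= (y+n)^3) by (apply pow_incr; lra).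
  assert (2 * n^2 <= n^3 + n^3) by nra.
  split; nra.
Qed.

Definition Phi0 := SL u0.
Definition Phi1 := SL u1.
Definition Phi2 := SL u2.
Definition Phi3 := SL u3.

Lemma boule_half x (r : posreal) y : pos r = x/2 -> Boule x r y -> x/2 < y < 3*x/2.
Proof.
  intros Hx H. unfold Boule in H. rewrite Hx in H. apply Rabs_def2 in H. lra.
Qed.

Lemma deriv_Phi0 x : 0 < x -> derivable_pt_lim Phi0 x (Phi1 x).
Proof.
  intros Hx. set (r := mkposreal (x/2) ltac:(lra)).
  apply (SL_deriv u0 u1 (SL u0) x r (1 + 3 * x)).
  - intros k y Hy. apply (boule_half x r) in Hy; [|reflexivity]. apply d_u0; lra.
  - lra.
  - intros y Hy. apply (boule_half x r) in Hy; [|reflexivity]. apply (Maj_mono _ (1 + 2*y)); [apply Maj_u1|]; lra.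
  - intros y Hy. apply (boule_half x r) in Hy; [|reflexivity]. apply (SL_conv u0 (2 * (y + y^2))). apply Maj_u0; lra.
Qed.

Lemma deriv_Phi1 x : 0 < x -> derivable_pt_lim Phi1 x (Phi2 x).
Proof.
  intros Hx. set (r := mkposreal (x/2) ltac:(lra)).
  apply (SL_deriv u1 u2 (SL u1) x r 2).
  - intros k y Hy. apply (boule_half x r) in Hy; [|reflexivity]. apply d_u1; lra.
  - lra.
  - intros y Hy. apply (boule_half x r) in Hy; [|reflexivity]. apply Maj_u2; lra.
  - intros y Hy. apply (boule_half x r) in Hy; [|reflexivity]. apply (SL_conv u1 (1 + 2 * y)). apply Maj_u1; lra.
Qed.

Lemma deriv_Phi2 x : 0 < x -> derivable_pt_lim Phi2 x (Phi3 x).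
Proof.
  intros Hx. set (r := mkposreal (x/2) ltac:(lra)).
  apply (SL_deriv u2 u3 (SL u2) x r 4).
  - intros k y Hy. apply (boule_half x r) in Hy; [|reflexivity]. apply d_u2; lra.
  - lra.
  - intros y Hy. apply (boule_half x r) in Hy; [|reflexivity]. apply Maj_u3; lra.
  - intros y Hy. apply (boule_half x r) in Hy; [|reflexivity]. apply (SL_conv u2 2). apply Maj_u2; lra.
Qed.

Lemma poch_pos x n : 0 < x -> 0 < poch x n.
Proof.
  intros Hx. induction n as [|n IH]; [simpl; lra|].
  change (poch x (S n)) with (poch x n * (x + INR (S n))).
  apply Rmult_lt_0_compat; auto. pose proof (pos_INR (S n)). lra.
Qed.

Lemma exp_PS x n : 0 < x ->
  exp (PS u0 n x) = INR (fact n) * Rpower (INR (S n)) x / poch x n.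
Proof.
  intros Hx. induction n as [|n IH].
  - unfold PS. simpl sum_f_R0. unfold u0. simpl fact. simpl poch.
    replace (INR 1) with 1 by reflexivity. unfold Rpower. rewrite ln_1, Rmult_0_r, exp_0.
    rewrite exp_Ropp, exp_ln by lra. simpl INR. field. lra.
  - change (PS u0 (S n) x) with (PS u0 n x + u0 (S n) x). rewrite exp_plus, IH.
    unfold u0; cbv beta iota.
    set (N := INR (S n)). assert (HN : 0 < N) by apply INR_pos_S.
    replace (INR (S (S n))) with (N + 1) by (unfold N; rewrite (S_INR (S n)); ring).
    replace (fact (S n)) with (S n * fact n)%nat by reflexivity.
    rewrite mult_INR. fold N.
    change (poch x (S n)) with (poch x n * (x + INR (S n))). fold N.
    unfold Rminus. rewrite exp_plus, exp_Ropp, exp_ln.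
    2: { assert (0 < x / N) by (apply Rdiv_lt_0_compat; lra). lra. }
    replace (exp (x * ln (1 + / N))) with (Rpower (1 + / N) x) by reflexivity.
    replace (N + 1) with (N * (1 + / N)) by (field; lra).
    rewrite <- Rpower_mult_distr; [|lra|].
    2: { assert (0 < / N) by (apply Rinv_0_lt_compat; lra). lra. }
    pose proof (poch_pos x n Hx).
    assert (0 < Rpower N x) by (unfold Rpower; apply exp_pos).
    assert (0 < 1 + /N) by (assert (0 < / N) by (apply Rinv_0_lt_compat; lra); lra).
    field. repeat split; lra.
Qed.

Lemma Un_cv_shift U l : Un_cv (fun n => U (S n)) l -> Un_cv U l.
Proof.
  intros H eps He. destruct (H eps He) as [N HN]. exists (S N). intros n Hn.
  destruct n as [|n]; [lia|]. apply HN. lia.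
Qed.

Lemma Gamma_eq x : 0 < x -> Gamma x = exp (Phi0 x).
Proof.
  intros Hx. unfold Gamma. apply the_or0_spec.
  2: { intros a b Ha Hb. eapply UL_sequence; eauto. }
  apply Un_cv_shift.
  assert (E : forall n, gauss_seq x (S n) = exp (PS u0 n x) * (INR (S n) / (x + INR (S n)))).
  { intros n. rewrite exp_PS by lra. unfold gauss_seq.
    replace (fact (S n)) with (S n * fact n)%nat by reflexivity.
    rewrite mult_INR. change (poch x (S n)) with (poch x n * (x + INR (S n))).
    pose proof (poch_pos x n Hx). pose proof (INR_pos_S n). field. lra. }
  apply (Un_cv_ext (fun n => exp (PS u0 n x) * (INR (S n) / (x + INR (S n))))).
  { intros n. rewrite E. reflexivity. }
  rewrite <- (Rmult_1_r (exp (Phi0 x))).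
  apply CV_mult.
  - apply (continuity_seq exp). apply derivable_continuous_pt, derivable_pt_exp.
    apply (SL_conv u0 (2 * (x + x^2))). apply Maj_u0; lra.
  - intros eps He. destruct (small_inv x eps He ltac:(lra)) as [N HN]. exists N. intros n Hn.
    specialize (HN n Hn). pose proof (INR_pos_S n). unfold Rdist.
    replace (INR (S n) / (x + INR (S n)) - 1) with (- (x / (x + INR (S n)))) by (field; lra).
    rewrite Rabs_Ropp. rewrite Rabs_pos_eq by (apply Rlt_le, Rdiv_lt_0_compat; lra).
    eapply Rle_lt_trans; [|exact HN].
    unfold Rdiv. apply Rmult_le_compat_l; [lra|]. apply Rinv_le_contravar; lra.
Qed.

Lemma loc_ext f g x l : 0 < x -> (forall y, 0 < y -> f y = g y) ->
  derivable_pt_lim g x l -> derivable_pt_lim f x l.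
Proof.
  intros Hx Hfg Hg eps He. destruct (Hg eps He) as [d Hd].
  assert (Hd' : 0 < Rmin d (x/2)) by (apply Rmin_pos; [apply cond_pos|lra]).
  exists (mkposreal _ Hd'). intros h Hh0 Hh. simpl in Hh.
  assert (Rabs h < d) by (eapply Rlt_le_trans; [exact Hh|apply Rmin_l]).
  assert (Rabs h < x/2) by (eapply Rlt_le_trans; [exact Hh|apply Rmin_r]).
  apply Rabs_def2 in H0.
  rewrite !Hfg by lra. apply Hd; auto.
Qed.

Lemma deriv_eq f x l : derivable_pt_lim f x l -> deriv f x = l.
Proof.
  intros H. unfold deriv. apply the_or0_spec; auto.
  intros a b Ha Hb. eapply uniqueness_limite; eauto.
Qed.

Lemma psi_eq x : 0 < x -> psi x = Phi1 x.
Proof.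
  intros Hx. unfold psi. rewrite Gamma_eq by auto.
  rewrite (deriv_eq Gamma x (exp (Phi0 x) * Phi1 x)).
  - pose proof (exp_pos (Phi0 x)). field. lra.
  - apply (loc_ext Gamma (fun y => exp (Phi0 y))); auto.
    + intros; apply Gamma_eq; auto.
    + apply (derivable_pt_lim_comp Phi0 exp). apply deriv_Phi0; auto.
      apply derivable_pt_lim_exp.
Qed.

Lemma psi1_eq x : 0 < x -> psi1 x = Phi2 x.
Proof.
  intros Hx. unfold psi1. apply deriv_eq. apply (loc_ext psi Phi1); auto.
  - intros; apply psi_eq; auto.
  - apply deriv_Phi1; auto.
Qed.

Lemma psi2_eq x : 0 < x -> psi2 x = Phi3 x.
Proof.
  intros Hx. unfold psi2. apply deriv_eq. apply (loc_ext psi1 Phi2); auto.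
  - intros; apply psi1_eq; auto.
  - apply deriv_Phi2; auto.
Qed.

Lemma Un_cv_shift' U l : Un_cv U l -> Un_cv (fun n => U (S n)) l.
Proof. intros H eps He. destruct (H eps He) as [N HN]. exists N. intros n Hn. apply HN. lia. Qed.

Lemma PS_shift u n z : PS u (S n) z = u 0%nat z + PS (fun k => u (S k)) n z.
Proof.
  unfold PS. induction n as [|n IH].
  - simpl. reflexivity.
  - change (sum_f_R0 (fun k => u k z) (S (S n))) with (sum_f_R0 (fun k => u k z) (S n) + u (S (S n)) z).
    rewrite IH. simpl. ring.
Qed.

Lemma PS_ext u v n z z' : (forall k, u k z = v k z') -> PS u n z = PS v n z'.
Proof. intros H. unfold PS. induction n; simpl; rewrite ?IHn, ?H; reflexivity. Qed.

Lemma cv_le U l b : Un_cv U l -> (forall n, U n <= b) -> l <= b.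
Proof.
  intros H Hb. destruct (Rle_lt_dec l b) as [|Hlt]; auto. exfalso.
  destruct (H (l - b) ltac:(lra)) as [N HN]. specialize (HN N (le_n _)). specialize (Hb N).
  unfold Rdist in HN. apply Rabs_def2 in HN. lra.
Qed.

Lemma cv_ge U l b : Un_cv U l -> (forall n, b <= U n) -> b <= l.
Proof.
  intros H Hb. destruct (Rle_lt_dec b l) as [|Hlt]; auto. exfalso.
  destruct (H (b - l) ltac:(lra)) as [N HN]. specialize (HN N (le_n _)). specialize (Hb N).
  unfold Rdist in HN. apply Rabs_def2 in HN. lra.
Qed.

Lemma conv2 z : 0 < z -> Un_cv (fun n => PS u2 n z) (Phi2 z).
Proof. intros Hz. apply (SL_conv u2 2). apply Maj_u2; auto. Qed.
Lemma conv3 z : 0 < z -> Un_cv (fun n => PS u3 n z) (Phi3 z).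
Proof. intros Hz. apply (SL_conv u3 4). apply Maj_u3; auto. Qed.

Lemma Phi2_rec z : 0 < z -> Phi2 z = / z ^ 2 + Phi2 (z + 1).
Proof.
  intros Hz. eapply UL_sequence.
  - apply Un_cv_shift'. apply conv2; auto.
  - apply (Un_cv_ext (fun n => / z ^ 2 + PS u2 n (z + 1))).
    + intros n. rewrite PS_shift. f_equal.
      * unfold u2. simpl INR. rewrite Rplus_0_r. reflexivity.
      * apply PS_ext. intros k. unfold u2. rewrite S_INR. f_equal. f_equal. ring.
    + apply CV_plus; [|apply conv2; lra]. intros eps He. exists 0%nat. intros. unfold Rdist.
      rewrite Rminus_diag, Rabs_R0. auto.
Qed.

Lemma Phi3_rec z : 0 < z -> Phi3 z = -2 / z ^ 3 + Phi3 (z + 1).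
Proof.
  intros Hz. eapply UL_sequence.
  - apply Un_cv_shift'. apply conv3; auto.
  - apply (Un_cv_ext (fun n => -2 / z ^ 3 + PS u3 n (z + 1))).
    + intros n. rewrite PS_shift. f_equal.
      * unfold u3. simpl INR. rewrite Rplus_0_r. reflexivity.
      * apply PS_ext. intros k. unfold u3. rewrite S_INR. f_equal. f_equal. ring.
    + apply CV_plus; [|apply conv3; lra]. intros eps He. exists 0%nat. intros. unfold Rdist.
      rewrite Rminus_diag, Rabs_R0. auto.
Qed.

Lemma PS2_bounds z : 0 < z -> forall n, 0 <= PS u2 n z <= / z ^ 2 + / z - / (z + INR n).
Proof.
  intros Hz n. induction n as [|n IH].
  - change (PS u2 0 z) with (u2 0 z). unfold u2. replace (INR 0) with 0 by reflexivity. rewrite !Rplus_0_r.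
    assert (0 < / z ^ 2) by (apply Rinv_0_lt_compat, pow_lt; lra). split; lra.
  - change (PS u2 (S n) z) with (PS u2 n z + / (z + INR (S n)) ^ 2).
    rewrite S_INR. set (a := z + INR n) in *. assert (0 < a) by (pose proof (pos_INR n); unfold a; lra).
    replace (z + (INR n + 1)) with (a + 1) by (unfold a; ring).
    assert (0 < / (a + 1) ^ 2) by (apply Rinv_0_lt_compat, pow_lt; lra).
    assert (/ (a + 1) ^ 2 <= / a - / (a + 1)).
    { replace (/ a - / (a + 1)) with (/ (a * (a+1))) by (field; lra).
      apply Rinv_le_contravar; nra. }
    lra.
Qed.

Lemma PS3_bounds z : 0 < z -> forall n, - (2 / z ^ 3 + / z ^ 2) + / (z + INR n) ^ 2 <= PS u3 n z <= 0.
Proof.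
  intros Hz n. induction n as [|n IH].
  - change (PS u3 0 z) with (-2 / (z + INR 0) ^ 3). replace (INR 0) with 0 by reflexivity. rewrite !Rplus_0_r.
    assert (0 < 2 / z ^ 3) by (apply Rdiv_lt_0_compat; [lra|apply pow_lt; lra]).
    assert (0 < / z ^ 2) by (apply Rinv_0_lt_compat, pow_lt; lra). unfold Rdiv in *. split; lra.
  - change (PS u3 (S n) z) with (PS u3 n z + -2 / (z + INR (S n)) ^ 3).
    rewrite S_INR. set (a := z + INR n) in *. assert (0 < a) by (pose proof (pos_INR n); unfold a; lra).
    replace (z + (INR n + 1)) with (a + 1) by (unfold a; ring).
    assert (0 < 2 / (a + 1) ^ 3) by (apply Rdiv_lt_0_compat; [lra|apply pow_lt; lra]).
    assert (2 / (a + 1) ^ 3 <= / a ^ 2 - / (a + 1) ^ 2).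
    { replace (/ a ^ 2 - / (a + 1) ^ 2) with ((2 * a + 1) / (a^2 * (a+1)^2)) by (field; lra).
      apply (Rmult_le_reg_r ((a+1)^3 * (a^2 * (a+1)^2))). { apply Rmult_lt_0_compat; apply pow_lt || nra; nra. }
      replace (2 / (a + 1) ^ 3 * ((a + 1) ^ 3 * (a ^ 2 * (a + 1) ^ 2))) with (2 * (a^2 * (a+1)^2)) by (field; lra).
      replace ((2 * a + 1) / (a ^ 2 * (a + 1) ^ 2) * ((a + 1) ^ 3 * (a ^ 2 * (a + 1) ^ 2))) with ((2*a+1) * (a+1)^3) by (field; lra).
      assert (0 < a^2) by nra. assert (0 < (a+1)^2) by nra. nra. }
    replace (-2 / (a + 1) ^ 3) with (- (2 / (a + 1) ^ 3)) by (unfold Rdiv; ring).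
    lra.
Qed.

Lemma Phi2_bounds z : 0 < z -> 0 <= Phi2 z <= / z ^ 2 + / z.
Proof.
  intros Hz. split.
  - apply (cv_ge (fun n => PS u2 n z)); [apply conv2; auto|]. intros n; apply PS2_bounds; auto.
  - apply (cv_le (fun n => PS u2 n z)); [apply conv2; auto|]. intros n.
    destruct (PS2_bounds z Hz n). assert (0 < / (z + INR n)) by (apply Rinv_0_lt_compat; pose proof (pos_INR n); lra). lra.
Qed.

Lemma Phi3_bounds z : 0 < z -> - (2 / z ^ 3 + / z ^ 2) <= Phi3 z <= 0.
Proof.
  intros Hz. split.
  - apply (cv_ge (fun n => PS u3 n z)); [apply conv3; auto|]. intros n.
    destruct (PS3_bounds z Hz n). assert (0 < / (z + INR n)^2) by (apply Rinv_0_lt_compat; pose proof (pos_INR n); apply pow_lt; lra). lra.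
  - apply (cv_le (fun n => PS u3 n z)); [apply conv3; auto|]. intros n; apply PS3_bounds; auto.
Qed.

Definition Lf (y : R) := / y + / (2 * y ^ 2) + / (6 * y ^ 3) - / (30 * y ^ 5).
Definition Uf (y : R) := / y + / (2 * y ^ 2) + / (6 * y ^ 3).
Definition Vf (y : R) := / y ^ 2 + / y ^ 3 + / (2 * y ^ 4).
Definition fm (m y : R) := (y ^ 2 + m * y + 12) / (12 * y ^ 4 * (y + 1) ^ 2).

Ltac pospoly := repeat (apply Rplus_lt_0_compat || apply Rmult_lt_0_compat || apply pow_lt || apply Rinv_0_lt_compat); try lra.

Lemma I1 z : 0 < z -> Lf z - Lf (z + 1) < / z ^ 2.
Proof.
  intros Hz. unfold Lf.
  assert (E : / z ^ 2 - ((/ z + / (2 * z ^ 2) + / (6 * z ^ 3) - / (30 * z ^ 5)) -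
     (/ (z+1) + / (2 * (z+1) ^ 2) + / (6 * (z+1) ^ 3) - / (30 * (z+1) ^ 5)))
     = (1 + 5 * z + 5 * z ^ 2) / (30 * z ^ 5 * (z + 1) ^ 5)) by (field; lra).
  assert (0 < (1 + 5 * z + 5 * z ^ 2) / (30 * z ^ 5 * (z + 1) ^ 5)) by (unfold Rdiv; pospoly).
  lra.
Qed.

Lemma I2 z : 0 < z -> / z ^ 2 < Uf z - Uf (z + 1).
Proof.
  intros Hz. unfold Uf.
  assert (E : (/ z + / (2 * z ^ 2) + / (6 * z ^ 3)) - (/ (z+1) + / (2 * (z+1) ^ 2) + / (6 * (z+1) ^ 3)) - / z ^ 2
     = 1 / (6 * z ^ 3 * (z + 1) ^ 3)) by (field; lra).
  assert (0 < 1 / (6 * z ^ 3 * (z + 1) ^ 3)) by (unfold Rdiv; pospoly).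
  lra.
Qed.

Lemma I3 z : 0 < z -> 2 / z ^ 3 < Vf z - Vf (z + 1).
Proof.
  intros Hz. unfold Vf.
  assert (E : (/ z ^ 2 + / z ^ 3 + / (2 * z ^ 4)) - (/ (z+1) ^ 2 + / (z+1) ^ 3 + / (2 * (z+1) ^ 4)) - 2 / z ^ 3
     = (1 + 2 * z) / (2 * z ^ 4 * (z + 1) ^ 4)) by (field; lra).
  assert (0 < (1 + 2 * z) / (2 * z ^ 4 * (z + 1) ^ 4)) by (unfold Rdiv; pospoly).
  lra.
Qed.

Lemma I4 z : 0 < z -> 0 < 2 * Lf (z + 1) / z ^ 2 + / z ^ 4 - 2 / z ^ 3 - fm 0 z + fm 0 (z + 1).
Proof.
  intros Hz. unfold Lf, fm.
  assert (E : 2 * (/ (z+1) + / (2 * (z+1) ^ 2) + / (6 * (z+1) ^ 3) - / (30 * (z+1) ^ 5)) / z ^ 2 + / z ^ 4 - 2 / z ^ 3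
     - (z ^ 2 + 0 * z + 12) / (12 * z ^ 4 * (z + 1) ^ 2) + ((z+1) ^ 2 + 0 * (z+1) + 12) / (12 * (z+1) ^ 4 * ((z+1) + 1) ^ 2)
     = (11 + 36 * z + 49 * z ^ 2 + 25 * z ^ 3) / (15 * z ^ 2 * (z + 1) ^ 5 * (z + 2) ^ 2)) by (field; lra).
  rewrite E. unfold Rdiv; pospoly.
Qed.

Lemma I5 z : 0 < z -> 2 * Uf (z + 1) / z ^ 2 + / z ^ 4 - 2 / z ^ 3 - fm 4 z + fm 4 (z + 1) < 0.
Proof.
  intros Hz. unfold Uf, fm.
  assert (E : 2 * (/ (z+1) + / (2 * (z+1) ^ 2) + / (6 * (z+1) ^ 3)) / z ^ 2 + / z ^ 4 - 2 / z ^ 3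
     - (z ^ 2 + 4 * z + 12) / (12 * z ^ 4 * (z + 1) ^ 2) + ((z+1) ^ 2 + 4 * (z+1) + 12) / (12 * (z+1) ^ 4 * ((z+1) + 1) ^ 2)
     = - ((4 + 9 * z + 8 * z ^ 2) / (3 * z ^ 3 * (z + 1) ^ 4 * (z + 2) ^ 2))) by (field; lra).
  rewrite E. assert (0 < (4 + 9 * z + 8 * z ^ 2) / (3 * z ^ 3 * (z + 1) ^ 4 * (z + 2) ^ 2)) by (unfold Rdiv; pospoly).
  lra.
Qed.

Definition Dec (G : R -> R) := forall eps, 0 < eps -> exists M, forall z, M <= z -> Rabs (G z) < eps.

Lemma Dec_bound G K : 0 <= K -> (forall z, 1 <= z -> Rabs (G z) <= K / z) -> Dec G.
Proof.
  intros HK H eps He. exists (Rmax 1 (K / eps + 1)). intros z Hz.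
  assert (1 <= z) by (eapply Rle_trans; [apply Rmax_l|exact Hz]).
  assert (K / eps + 1 <= z) by (eapply Rle_trans; [apply Rmax_r|exact Hz]).
  eapply Rle_lt_trans; [apply H; auto|].
  apply (Rmult_lt_reg_r z); [lra|]. replace (K / z * z) with K by (field; lra).
  assert (K / eps * eps = K) by (field; lra).
  assert (K / eps + 1 <= z) by lra.
  assert ((K/eps + 1) * eps <= z * eps) by (apply Rmult_le_compat_r; lra). nra.
Qed.

Lemma Dec_plus f g : Dec f -> Dec g -> Dec (fun z => f z + g z).
Proof.
  intros Hf Hg eps He. destruct (Hf (eps/2) ltac:(lra)) as [M1 H1]. destruct (Hg (eps/2) ltac:(lra)) as [M2 H2].
  exists (Rmax M1 M2). intros z Hz.
  assert (M1 <= z) by (eapply Rle_trans; [apply Rmax_l|exact Hz]).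
  assert (M2 <= z) by (eapply Rle_trans; [apply Rmax_r|exact Hz]).
  eapply Rle_lt_trans; [apply Rabs_triang|]. specialize (H1 z H). specialize (H2 z H0). lra.
Qed.

Lemma Dec_opp f : Dec f -> Dec (fun z => - f z).
Proof. intros Hf eps He. destruct (Hf eps He) as [M H]. exists M. intros z Hz. rewrite Rabs_Ropp. auto. Qed.

Lemma Dec_minus f g : Dec f -> Dec g -> Dec (fun z => f z - g z).
Proof. intros Hf Hg. apply (Dec_plus f (fun z => - g z)); auto. apply Dec_opp; auto. Qed.

Lemma Dec_sq f : Dec f -> Dec (fun z => f z ^ 2).
Proof.
  intros Hf eps He. destruct (Hf (Rmin 1 eps) ltac:(apply Rmin_pos; lra)) as [M H]. exists M. intros z Hz.
  specialize (H z Hz). rewrite <- RPow_abs. simpl. rewrite Rmult_1_r.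
  assert (Rmin 1 eps <= 1) by apply Rmin_l. assert (Rmin 1 eps <= eps) by apply Rmin_r.
  pose proof (Rabs_pos (f z)). nra.
Qed.

Lemma inv_le_z c k z : 1 <= c -> 1 <= z -> (1 <= k)%nat -> Rabs (/ (c * z ^ k)) <= 1 / z.
Proof.
  intros Hc Hz Hk. assert (1 <= z ^ (k - 1)) by (apply pow_R1_Rle; lra).
  replace (z ^ k) with (z * z ^ (k - 1)) by (destruct k; [lia|simpl; rewrite Nat.sub_0_r; reflexivity]).
  assert (0 < c * (z * z ^ (k-1))) by (apply Rmult_lt_0_compat; [lra|apply Rmult_lt_0_compat; lra]).
  rewrite Rabs_pos_eq by (left; apply Rinv_0_lt_compat; auto).
  unfold Rdiv. rewrite Rmult_1_l. apply Rinv_le_contravar; [lra|].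
  assert (z * 1 <= z * z ^ (k-1)) by (apply Rmult_le_compat_l; lra).
  assert (1 * (z * z ^ (k-1)) <= c * (z * z ^ (k-1))) by (apply Rmult_le_compat_r; lra). lra.
Qed.

Lemma Dec_inv c k : 1 <= c -> (1 <= k)%nat -> Dec (fun z => / (c * z ^ k)).
Proof. intros Hc Hk. apply (Dec_bound _ 1); [lra|]. intros z Hz. apply inv_le_z; auto. Qed.

Lemma Dec_ext f g : Dec g -> (forall z, 1 <= z -> f z = g z) -> Dec f.
Proof.
  intros Hg E eps He. destruct (Hg eps He) as [M H]. exists (Rmax 1 M). intros z Hz.
  rewrite E by (eapply Rle_trans; [apply Rmax_l|exact Hz]). apply H. eapply Rle_trans; [apply Rmax_r|exact Hz].
Qed.

Lemma Dec_Lf : Dec Lf.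
Proof.
  unfold Lf. apply (Dec_minus (fun z => / z + / (2 * z ^ 2) + / (6 * z ^ 3))).
  - apply (Dec_plus (fun z => / z + / (2 * z ^ 2))).
    + apply (Dec_plus (fun z => / z)).
      * apply (Dec_ext _ (fun z => / (1 * z ^ 1))). apply Dec_inv; lra || lia. intros; f_equal; ring.
      * apply Dec_inv; lra || lia.
    + apply Dec_inv; lra || lia.
  - apply Dec_inv; lra || lia.
Qed.

Lemma Dec_Uf : Dec Uf.
Proof.
  unfold Uf. apply (Dec_plus (fun z => / z + / (2 * z ^ 2))).
  + apply (Dec_plus (fun z => / z)).
    * apply (Dec_ext _ (fun z => / (1 * z ^ 1))). apply Dec_inv; lra || lia. intros; f_equal; ring.
    * apply Dec_inv; lra || lia.
  + apply Dec_inv; lra || lia.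
Qed.

Lemma Dec_Vf : Dec Vf.
Proof.
  unfold Vf. apply (Dec_plus (fun z => / z ^ 2 + / z ^ 3)).
  + apply (Dec_plus (fun z => / z ^ 2)).
    * apply (Dec_ext _ (fun z => / (1 * z ^ 2))). apply Dec_inv; lra || lia. intros; f_equal; ring.
    * apply (Dec_ext _ (fun z => / (1 * z ^ 3))). apply Dec_inv; lra || lia. intros; f_equal; ring.
  + apply Dec_inv; lra || lia.
Qed.

Lemma Dec_fm m : 0 <= m -> Dec (fm m).
Proof.
  intros Hm. apply (Dec_bound _ (13 + m)); [lra|]. intros z Hz. unfold fm.
  assert (0 < 12 * z ^ 4 * (z + 1) ^ 2) by (repeat apply Rmult_lt_0_compat; try apply pow_lt; lra).
  rewrite Rabs_pos_eq.
  2: { apply Rlt_le, Rdiv_lt_0_compat; auto. nra. }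
  apply (Rmult_le_reg_r (12 * z ^ 4 * (z + 1) ^ 2 * z)). nra.
  replace ((z ^ 2 + m * z + 12) / (12 * z ^ 4 * (z + 1) ^ 2) * (12 * z ^ 4 * (z + 1) ^ 2 * z)) with
     ((z ^ 2 + m * z + 12) * z) by (field; lra).
  replace ((13 + m) / z * (12 * z ^ 4 * (z + 1) ^ 2 * z)) with ((13 + m) * (12 * z ^ 4 * (z + 1) ^ 2)) by (field; lra).
  assert (1 <= z ^ 4) by (apply pow_R1_Rle; lra).
  assert (1 <= (z+1) ^ 2) by (apply pow_R1_Rle; lra).
  assert (z ^ 2 * z <= z ^ 4 * (z+1)^2).
  { replace (z ^ 2 * z) with (z ^ 3 * 1) by ring. replace (z^4) with (z^3 * z) by ring.
    assert (1 <= z^3) by (apply pow_R1_Rle; lra). nra. }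
  assert (z <= z ^ 4 * (z+1)^2) by nra.
  assert (z ^ 4 <= z ^ 4 * (z+1)^2) by nra.
  assert (z^2 <= z^4) by (replace (z^4) with (z^2 * z^2) by ring; assert (1 <= z^2) by (apply pow_R1_Rle; lra); nra).
  assert (z * z <= z ^ 4 * (z + 1) ^ 2) by (replace (z*z) with (z^2) by ring; lra).
  assert (m * (z * z) <= m * (z ^ 4 * (z + 1) ^ 2)) by (apply Rmult_le_compat_l; auto).
  nra.
Qed.

Lemma Dec_Phi2 : Dec Phi2.
Proof.
  apply (Dec_bound _ 2); [lra|]. intros z Hz. destruct (Phi2_bounds z ltac:(lra)).
  rewrite Rabs_pos_eq by auto.
  assert (/ z ^ 2 <= / z). { apply Rinv_le_contravar; [lra|]. simpl. nra. }
  unfold Rdiv. lra.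
Qed.

Lemma Dec_Phi3 : Dec Phi3.
Proof.
  apply (Dec_bound _ 3); [lra|]. intros z Hz. destruct (Phi3_bounds z ltac:(lra)).
  rewrite Rabs_left1 by auto.
  assert (/ z ^ 2 <= / z). { apply Rinv_le_contravar; [lra|]. simpl. nra. }
  assert (/ z ^ 3 <= / z). { apply Rinv_le_contravar; [lra|]. simpl. nra. }
  unfold Rdiv in *. lra.
Qed.

Lemma tele G y : 0 < y -> (forall z, 0 < z -> G (z + 1) < G z) -> Dec G -> 0 < G y.
Proof.
  intros Hy Hst HD.
  assert (Hmono : forall n, G (y + 1 + INR n) <= G (y + 1)).
  { induction n as [|n IH].
    - simpl. rewrite Rplus_0_r. lra.
    - rewrite S_INR. replace (y + 1 + (INR n + 1)) with ((y + 1 + INR n) + 1) by ring.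
      pose proof (pos_INR n). pose proof (Hst (y + 1 + INR n) ltac:(lra)). lra. }
  pose proof (Hst y Hy).
  destruct (Rlt_le_dec 0 (G y)) as [|Hle]; auto. exfalso.
  destruct (HD (- G (y + 1)) ltac:(lra)) as [M HM].
  destruct (INR_archimed 1 M ltac:(lra)) as [n Hn]. rewrite Rmult_1_r in Hn.
  specialize (HM (y + 1 + INR n) ltac:(lra)). specialize (Hmono n).
  apply Rabs_def2 in HM. lra.
Qed.

Lemma T1 y : 0 < y -> Lf y < Phi2 y.
Proof.
  intros Hy. assert (H : 0 < (fun z => Phi2 z - Lf z) y).
  { apply (tele (fun z => Phi2 z - Lf z)); auto.
    - intros z Hz; cbv beta. rewrite (Phi2_rec z Hz). pose proof (I1 z Hz). lra.
    - apply Dec_minus; [apply Dec_Phi2|apply Dec_Lf]. }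
  simpl in H. lra.
Qed.

Lemma T2 y : 0 < y -> Phi2 y < Uf y.
Proof.
  intros Hy. assert (H : 0 < (fun z => Uf z - Phi2 z) y).
  { apply (tele (fun z => Uf z - Phi2 z)); auto.
    - intros z Hz; cbv beta. rewrite (Phi2_rec z Hz). pose proof (I2 z Hz). lra.
    - apply Dec_minus; [apply Dec_Uf|apply Dec_Phi2]. }
  simpl in H. lra.
Qed.

Lemma T3 y : 0 < y -> - Vf y < Phi3 y.
Proof.
  intros Hy. assert (H : 0 < (fun z => Phi3 z + Vf z) y).
  { apply (tele (fun z => Phi3 z + Vf z)); auto.
    - intros z Hz; cbv beta. rewrite (Phi3_rec z Hz). pose proof (I3 z Hz). unfold Rdiv in *. lra.
    - apply Dec_plus; [apply Dec_Phi3|apply Dec_Vf]. }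
  simpl in H. lra.
Qed.

Lemma T4 y : 0 < y -> fm 0 y < Phi2 y ^ 2 + Phi3 y.
Proof.
  intros Hy. assert (H : 0 < (fun z => Phi2 z ^ 2 + Phi3 z - fm 0 z) y).
  { apply (tele (fun z => Phi2 z ^ 2 + Phi3 z - fm 0 z)); auto.
    - intros z Hz; cbv beta. rewrite (Phi2_rec z Hz), (Phi3_rec z Hz). pose proof (I4 z Hz).
      pose proof (T1 (z + 1) ltac:(lra)). set (P := Phi2 (z + 1)) in *.
      assert (0 < / z ^ 2) by (apply Rinv_0_lt_compat, pow_lt; lra).
      assert (2 * Lf (z + 1) / z ^ 2 < 2 * P / z ^ 2).
      { unfold Rdiv. apply Rmult_lt_compat_r; auto. lra. }
      assert (E : (/ z ^ 2 + P) ^ 2 = / z ^ 4 + 2 * P / z ^ 2 + P ^ 2) by (field; lra).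
      rewrite E. unfold Rdiv in *. lra.
    - apply Dec_minus; [apply Dec_plus; [apply Dec_sq, Dec_Phi2|apply Dec_Phi3]|apply Dec_fm; lra]. }
  simpl in H. lra.
Qed.

Lemma T5 y : 0 < y -> Phi2 y ^ 2 + Phi3 y < fm 4 y.
Proof.
  intros Hy. assert (H : 0 < (fun z => fm 4 z - (Phi2 z ^ 2 + Phi3 z)) y).
  { apply (tele (fun z => fm 4 z - (Phi2 z ^ 2 + Phi3 z))); auto.
    - intros z Hz; cbv beta. rewrite (Phi2_rec z Hz), (Phi3_rec z Hz). pose proof (I5 z Hz).
      pose proof (T2 (z + 1) ltac:(lra)). set (P := Phi2 (z + 1)) in *.
      assert (0 < / z ^ 2) by (apply Rinv_0_lt_compat, pow_lt; lra).
      assert (2 * P / z ^ 2 < 2 * Uf (z + 1) / z ^ 2).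
      { unfold Rdiv. apply Rmult_lt_compat_r; auto. lra. }
      assert (E : (/ z ^ 2 + P) ^ 2 = / z ^ 4 + 2 * P / z ^ 2 + P ^ 2) by (field; lra).
      rewrite E. unfold Rdiv in *. lra.
    - apply Dec_minus; [apply Dec_fm; lra|apply Dec_plus; [apply Dec_sq, Dec_Phi2|apply Dec_Phi3]]. }
  simpl in H. lra.
Qed.

Lemma mu_case mu : 0 < mu -> exists x, 0 < x /\ Phi2 x ^ 2 + Phi3 x <= fm mu x.
Proof.
  intros Hmu. set (x := Rmin 1 (mu / 323)). exists x.
  assert (Hx1 : x <= 1) by apply Rmin_l. assert (Hx2 : x <= mu / 323) by apply Rmin_r.
  assert (Hx : 0 < x) by (apply Rmin_pos; lra).
  split; auto.
  rewrite (Phi2_rec x Hx), (Phi3_rec x Hx).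
  destruct (Phi2_bounds (x + 1) ltac:(lra)) as [P0 P1]. destruct (Phi3_bounds (x + 1) ltac:(lra)) as [_ Q0].
  set (P := Phi2 (x + 1)) in *. set (Q := Phi3 (x + 1)) in *.
  assert (P <= 2).
  { assert (/ (x+1) ^ 2 <= 1). { rewrite <- Rinv_1. apply Rinv_le_contravar; [lra|]. simpl. nra. }
    assert (/ (x+1) <= 1). { rewrite <- Rinv_1. apply Rinv_le_contravar; lra. } lra. }
  assert (0 < / x ^ 2) by (apply Rinv_0_lt_compat, pow_lt; lra).
  assert ((/ x ^ 2 + P) ^ 2 <= (/ x ^ 2 + 2) ^ 2) by (apply pow_incr; lra).
  assert (E : fm mu x - ((/ x ^ 2 + 2) ^ 2 + -2 / x ^ 3)
            = x * (mu - 11 * x - 72 * x ^ 2 - 96 * x ^ 3 - 96 * x ^ 4 - 48 * x ^ 5) / (12 * x ^ 4 * (x + 1) ^ 2)).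
  { unfold fm. field. lra. }
  assert (0 <= x * (mu - 11 * x - 72 * x ^ 2 - 96 * x ^ 3 - 96 * x ^ 4 - 48 * x ^ 5) / (12 * x ^ 4 * (x + 1) ^ 2)).
  { apply Rmult_le_pos; [|left; apply Rinv_0_lt_compat; repeat apply Rmult_lt_0_compat; try apply pow_lt; lra].
    apply Rmult_le_pos; [lra|].
    assert (x ^ 2 <= x) by (simpl; nra).
    assert (x ^ 3 <= x) by (apply (Rle_trans _ (x^2)); auto; simpl; nra).
    assert (x ^ 4 <= x) by (apply (Rle_trans _ (x^3)); auto; simpl; nra).
    assert (x ^ 5 <= x) by (apply (Rle_trans _ (x^4)); auto; simpl; nra).
    lra. }
  lra.
Qed.

Lemma Lf_pos x : 1 <= x -> 0 < Lf x.
Proof.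
  intros Hx. unfold Lf.
  replace (/ x + / (2 * x ^ 2) + / (6 * x ^ 3) - / (30 * x ^ 5)) with
     ((30 * x ^ 4 + 15 * x ^ 3 + 5 * x ^ 2 - 1) / (30 * x ^ 5)) by (field; lra).
  apply Rdiv_lt_0_compat; [|apply Rmult_lt_0_compat; [lra|apply pow_lt; lra]].
  assert (1 <= x ^ 4) by (apply pow_R1_Rle; lra).
  assert (1 <= x ^ 3) by (apply pow_R1_Rle; lra).
  assert (1 <= x ^ 2) by (apply pow_R1_Rle; lra). lra.
Qed.

Lemma nu_case nu : nu < 4 -> exists x, 0 < x /\ fm nu x <= Phi2 x ^ 2 + Phi3 x.
Proof.
  intros Hnu. set (d := 4 - nu). assert (Hd : 0 < d) by (unfold d; lra).
  set (x := 10 / d + 1). assert (Hx : 1 <= x) by (unfold x; assert (0 < 10 / d) by (apply Rdiv_lt_0_compat; lra); lra).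
  assert (Hdx : 10 <= d * x) by (unfold x; replace (d * (10 / d + 1)) with (10 + d) by (field; lra); lra).
  exists x. split; [lra|].
  pose proof (T1 x ltac:(lra)). pose proof (T3 x ltac:(lra)). pose proof (Lf_pos x Hx).
  assert (Lf x ^ 2 <= Phi2 x ^ 2) by (apply pow_incr; lra).
  assert (E : Lf x ^ 2 - Vf x - fm nu x =
     (3456 + 6912 * x - 31104 * x ^ 2 - 172800 * x ^ 3 - 362880 * x ^ 4 + 172800 * x ^ 5
      - 1935360 * x ^ 6 + 259200 * d * x ^ 7) / (3110400 * x ^ 10 * (x + 1) ^ 2)).
  { unfold Lf, Vf, fm, d. field. lra. }
  assert (0 <= (3456 + 6912 * x - 31104 * x ^ 2 - 172800 * x ^ 3 - 362880 * x ^ 4 + 172800 * x ^ 5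
      - 1935360 * x ^ 6 + 259200 * d * x ^ 7) / (3110400 * x ^ 10 * (x + 1) ^ 2)).
  { apply Rmult_le_pos; [|left; apply Rinv_0_lt_compat; repeat apply Rmult_lt_0_compat; try apply pow_lt; lra].
    assert (1 <= x ^ 6) by (apply pow_R1_Rle; lra).
    assert (x ^ 2 <= x ^ 6) by (apply Rle_pow; lra || lia).
    assert (x ^ 3 <= x ^ 6) by (apply Rle_pow; lra || lia).
    assert (x ^ 4 <= x ^ 6) by (apply Rle_pow; lra || lia).
    assert (0 <= x ^ 5) by (apply pow_le; lra).
    assert (10 * x ^ 6 <= d * x * x ^ 6) by (apply Rmult_le_compat_r; lra).
    replace (259200 * d * x ^ 7) with (259200 * (d * x * x ^ 6)) by ring.
    lra. }
  lra.
Qed.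

Theorem theorem1p1 (mu nu : R) :
  (forall x : R, 0 < x ->
     (x ^ 2 + mu * x + 12) / (12 * x ^ 4 * (x + 1) ^ 2) < psi1 x ^ 2 + psi2 x /\
     psi1 x ^ 2 + psi2 x < (x ^ 2 + nu * x + 12) / (12 * x ^ 4 * (x + 1) ^ 2))
  <-> (mu <= 0 /\ nu >= 4).
Proof.
  split.
  - intros H. split.
    + destruct (Rle_lt_dec mu 0) as [|Hmu]; auto. exfalso.
      destruct (mu_case mu Hmu) as [x [Hx Hle]]. destruct (H x Hx) as [H1 _].
      rewrite psi1_eq, psi2_eq in H1 by auto. fold (fm mu x) in H1. lra.
    + destruct (Rlt_le_dec nu 4) as [Hnu|]; [|lra]. exfalso.
      destruct (nu_case nu Hnu) as [x [Hx Hle]]. destruct (H x Hx) as [_ H2].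
      rewrite psi1_eq, psi2_eq in H2 by auto. fold (fm nu x) in H2. lra.
  - intros [Hmu Hnu] x Hx. rewrite psi1_eq, psi2_eq by auto.
    fold (fm mu x) (fm nu x).
    pose proof (T4 x Hx). pose proof (T5 x Hx).
    assert (0 < 12 * x ^ 4 * (x + 1) ^ 2) by (repeat apply Rmult_lt_0_compat; try apply pow_lt; lra).
    assert (fm mu x <= fm 0 x).
    { unfold fm, Rdiv. apply Rmult_le_compat_r; [left; apply Rinv_0_lt_compat; auto|]. nra. }
    assert (fm 4 x <= fm nu x).
    { unfold fm, Rdiv. apply Rmult_le_compat_r; [left; apply Rinv_0_lt_compat; auto|]. nra. }
    lra.
Qed.
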